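(* Let $R=\bigoplus_{\alpha\in\Gamma}R_{\alpha}$ be a graded integral domain and $\star$ a semistar operation on $R$. Then $N(\star):=\{f\in R[X]: f\neq0\text{ and }A_f^{\star}=R^{\star}\}$ is a saturated multiplicatively closed subset of $R[X]$.
   Context: $\Gamma$ is a commutative cancellative monoid (written additively) whose quotient group $\langle\Gamma\rangle$ is torsion-free. A graded integral domain $R=\bigoplus_{\alpha\in\Gamma}R_\alpha$ is an integral domain that is the direct sum of additive subgroups $R_\alpha$ with $R_\alpha R_\beta\subseteq R_{\alpha+\beta}$, with quotient field $K$. For $a\in R$, $C(a)$ is the ideal of $R$ generated by the homogeneous components of $a$; for $f=f_0+\cdots+f_nX^n\in R[X]$, $A_f:=\sum_i C(f_i)$. A semistar operation on $R$ is a map $\star$ from the set of nonzero $R$-submodules of $K$ to itself such that for all $0\ne x\in K$ and $E,F$: $(xE)^\star=xE^\star$; $E\subseteq F\Rightarrow E^\star\subseteq F^\star$; $E\subseteq E^\star$; $(E^\star)^\star=E^\star$. *)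

(* Defs.v *)
From mathcomp Require Import all_boot all_order all_algebra.
Set Implicit Arguments. Unset Strict Implicit. Unset Printing Implicit Defensive.
Import Order.TTheory GRing.Theory Num.Theory.
Local Open Scope ring_scope.

(* For a cancellative
   commutative monoid, torsion-freeness of the group of differences says
   exactly: n(a - b) = 0 with n > 0 implies a = b, i.e. n*a = n*b -> a = b. *)
Definition torsionfree_cancellative_monoid (G : nmodType) : Prop :=
  (forall a b c : G, a + c = b + c -> a = b) /\
  (forall (n : nat) (a b : G), (0 < n)%N -> a *+ n = b *+ n -> a = b).

(* A graded integral domain R = (+)_{alpha in G} R_alpha, presented inside its
   quotient field K.  R and the R_alpha are subsets of K. *)
Definition graded_domain (G : nmodType) (K : fieldType)
    (R : K -> Prop) (Rg : G -> K -> Prop) : Prop :=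
  [/\ R 1, (forall x y, R x -> R y -> R (x - y)) & (forall x y, R x -> R y -> R (x * y))] /\
  (forall a, Rg a 0) /\
  (forall a x y, Rg a x -> Rg a y -> Rg a (x - y)) /\
  (forall a x, Rg a x -> R x) /\
  (forall a b x y, Rg a x -> Rg b y -> Rg (a + b) (x * y)) /\
  (forall x, R x -> exists (s : seq G) (f : G -> K),
      [/\ uniq s, (forall a, a \in s -> Rg a (f a)) & x = \sum_(a <- s) f a]) /\
  (forall (s : seq G) (f : G -> K), uniq s -> (forall a, a \in s -> Rg a (f a)) ->
      \sum_(a <- s) f a = 0 -> forall a, a \in s -> f a = 0) /\
  (forall k : K, exists a b, [/\ R a, R b, b != 0 & k = a / b]).

Definition hcomp (G : nmodType) (K : fieldType) (Rg : G -> K -> Prop) (a y : K) : Prop :=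
  exists (s : seq G) (f : G -> K),
    [/\ uniq s, (forall b, b \in s -> Rg b (f b)), a = \sum_(b <- s) f b
      & exists2 b, b \in s & y = f b].

Definition ideal_gen (K : fieldType) (R : K -> Prop) (S : K -> Prop) : K -> Prop :=
  fun z => exists s : seq (K * K),
    [/\ (forall p, p \in s -> R p.1), (forall p, p \in s -> S p.2)
      & z = \sum_(p <- s) p.1 * p.2].

Definition Cont (G : nmodType) (K : fieldType) (R : K -> Prop) (Rg : G -> K -> Prop)
    (a : K) : K -> Prop := ideal_gen R (hcomp Rg a).

Definition Af (G : nmodType) (K : fieldType) (R : K -> Prop) (Rg : G -> K -> Prop)
    (f : {poly K}) : K -> Prop :=
  ideal_gen R (fun y => exists i : nat, hcomp Rg f`_i y).

Definition inRX (K : fieldType) (R : K -> Prop) (f : {poly K}) : Prop :=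
  forall i : nat, R f`_i.

Definition nz_submod (K : fieldType) (R : K -> Prop) (E : K -> Prop) : Prop :=
  [/\ E 0, (forall x y, E x -> E y -> E (x + y)),
      (forall r x, R r -> E x -> E (r * x)) & exists2 x, x != 0 & E x].

Definition scale_set (K : fieldType) (x : K) (E : K -> Prop) : K -> Prop :=
  fun z => exists2 e, E e & z = x * e.

(* semistar operation on R: a map from nonzero R-submodules of K to
   nonzero R-submodules of K (values outside are irrelevant) *)
Definition semistar (K : fieldType) (R : K -> Prop) (star : (K -> Prop) -> (K -> Prop)) : Prop :=
  [/\ (forall E, nz_submod R E -> nz_submod R (star E)),
      (forall (x : K) E, x != 0 -> nz_submod R E -> star (scale_set x E) = scale_set x (star E)),
      (forall E F, nz_submod R E -> nz_submod R F -> (forall z, E z -> F z) ->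
          forall z, star E z -> star F z),
      (forall E, nz_submod R E -> forall z, E z -> star E z)
    & (forall E, nz_submod R E -> star (star E) = star E)].

Definition Nstar (G : nmodType) (K : fieldType) (R : K -> Prop) (Rg : G -> K -> Prop)
    (star : (K -> Prop) -> (K -> Prop)) : {poly K} -> Prop :=
  fun f => [/\ inRX R f, f != 0 & star (Af R Rg f) = star R].

Definition saturated_mult_closed (K : fieldType) (R : K -> Prop) (N : {poly K} -> Prop) : Prop :=
  [/\ (forall f, N f -> inRX R f),
      N 1,
      (forall f g, N f -> N g -> N (f * g))
    & (forall f g, inRX R f -> inRX R g -> N (f * g) -> N f /\ N g)].

(* Main.v *)
Require Import Defs.
From mathcomp Require Import all_boot all_order all_algebra.
From mathcomp Require Import ring lra zify.
From Stdlib Require Import Classical ClassicalEpsilon FunctionalExtensionality PropExtensionality.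
Set Implicit Arguments. Unset Strict Implicit. Unset Printing Implicit Defensive.
Import Order.TTheory GRing.Theory Num.Theory.
Local Open Scope ring_scope.


Section Ord.
Variable M : nmodType.
Hypothesis canc : forall a b c : M, a + c = b + c -> a = b.
Hypothesis tf : forall (n : nat) (a b : M), (0 < n)%N -> a *+ n = b *+ n -> a = b.
Variable s : nat -> M.

Definition lin r (n : nat -> nat) := \sum_(i < r) s i *+ n i.
Definition linw (w : nat -> rat) r (n : nat -> nat) := \sum_(i < r) (n i)%:R * w i.

Lemma linS r n : lin r.+1 n = lin r n + s r *+ n r.
Proof. by rewrite /lin big_ord_recr. Qed.
Lemma linwS w r n : linw w r.+1 n = linw w r n + (n r)%:R * w r.
Proof. by rewrite /linw big_ord_recr. Qed.

Lemma lin_comb r a b c (x y z : nat -> nat) :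
  lin r (fun i => a * x i + b * y i + c * z i)%N = lin r x *+ a + lin r y *+ b + lin r z *+ c.
Proof.
rewrite /lin -!sumrMnl -!big_split /=; apply: eq_bigr => i _.
by rewrite !mulrnDr !mulrnA; congr (_ + _ + _); rewrite mulrnAC.
Qed.
Lemma linw_comb w r a b c (x y z : nat -> nat) :
  linw w r (fun i => a * x i + b * y i + c * z i)%N =
  a%:R * linw w r x + b%:R * linw w r y + c%:R * linw w r z.
Proof.
rewrite /linw !mulr_sumr -!big_split /=; apply: eq_bigr => i _.
rewrite !natrD !natrM; ring.
Qed.

Lemma canc_n (a b c : M) n : a + c *+ n = b + c *+ n -> a = b.
Proof.
elim: n a b => [|n IH] a b; first by rewrite !mulr0n !addr0.
rewrite mulrSr !addrA => /canc; exact: IH.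
Qed.

Lemma linw_ext w w' r n : (forall i, (i < r)%N -> w i = w' i) -> linw w r n = linw w' r n.
Proof. by move=> H; apply: eq_bigr => i _; rewrite H. Qed.

Lemma ord_vec r : forall (p : nat) (P : nat -> (nat -> nat) * (nat -> nat)),
  exists w : nat -> rat,
    (forall n m, lin r n = lin r m -> linw w r n = linw w r m) /\
    (forall i, (i < p)%N -> lin r (P i).1 <> lin r (P i).2 ->
        linw w r (P i).1 <> linw w r (P i).2).
Proof.
elim: r => [|r IH] p P.
  exists (fun _ => 0); split => [n m _|i _]; first by rewrite /linw !big_ord0.
  by rewrite /lin !big_ord0.
case: (classic (exists k n0 m0, (0 < k)%N /\ lin r n0 + s r *+ k = lin r m0)).
- move=> [k [n0 [m0 [k0 Hk]]]].
  pose tr (pr : (nat -> nat) * (nat -> nat)) :=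
    ((fun i => k * pr.1 i + pr.1 r * m0 i + pr.2 r * n0 i)%N,
     (fun i => k * pr.2 i + pr.2 r * m0 i + pr.1 r * n0 i)%N).
  have key : forall pr, lin r (tr pr).1 = lin r.+1 pr.1 *+ k + lin r n0 *+ (pr.1 r + pr.2 r) /\
                        lin r (tr pr).2 = lin r.+1 pr.2 *+ k + lin r n0 *+ (pr.1 r + pr.2 r).
    move=> [n m] /=; rewrite !lin_comb !linS -Hk !mulrnDl !mulrnDr.
    rewrite [s r *+ k *+ n r]mulrnAC [s r *+ k *+ m r]mulrnAC.
    split; rewrite -!addrA; congr (_ + _).
      by rewrite addrCA; congr (_ + _); rewrite addrC.
    by rewrite addrCA; congr (_ + _); rewrite addrC.
  have [w [Hc Hs]] := IH p (fun i => tr (P i)).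
  have kne0 : (k%:R : rat) != 0 by rewrite pnatr_eq0 -lt0n.
  pose x := linw w r m0; pose y := linw w r n0.
  pose w' := fun i => if i == r then (x - y) / k%:R else w i.
  have Ew : forall n, linw w' r n = linw w r n.
    by move=> n; apply: linw_ext => i Hi; rewrite /w' ifN // neq_ltn Hi.
  have iden : forall n m : nat -> nat,
     linw w' r.+1 n = linw w' r.+1 m +
       (linw w r (tr (n, m)).1 - linw w r (tr (n, m)).2) / k%:R.
    move=> n m; rewrite !linwS !Ew /= !linw_comb /w' eqxx -/x -/y.
    by field.
  exists w'; split.
    move=> n m Hnm; rewrite (iden n m).
    have [H1 H2] := key (n, m).
    by rewrite (Hc _ _ (etrans H1 (etrans _ (esym H2)))) ?subrr ?mul0r ?addr0 //= Hnm.
  move=> i Hi Hne; rewrite (iden (P i).1 (P i).2) -surjective_pairing => Heq.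
  have [H1 H2] := key (P i).
  apply: (Hs i Hi).
    by rewrite H1 H2 => /canc /(tf k0).
  apply/eqP; rewrite -subr_eq0; apply/eqP.
  have : (linw w r (tr (P i)).1 - linw w r (tr (P i)).2) / k%:R = 0.
    by apply: (addrI (linw w' r.+1 (P i).2)); rewrite addr0.
  move/eqP; rewrite mulf_eq0 invr_eq0 (negbTE kne0) orbF; exact: eqP.
- move=> NB.
  have [w [Hc Hs]] := IH p P.
  pose b := fun i => (linw w r (P i).2 - linw w r (P i).1) / (((P i).1 r)%:R - ((P i).2 r)%:R).
  pose t := 1 + \sum_(i < p) `|b i|.
  pose w' := fun i => if i == r then t else w i.
  have Ew : forall n, linw w' r n = linw w r n.
    by move=> n; apply: linw_ext => i Hi; rewrite /w' ifN // neq_ltn Hi.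
  have Ew' : forall n, linw w' r.+1 n = linw w r n + (n r)%:R * t.
    by move=> n; rewrite linwS Ew /w' eqxx.
  have eqr : forall n m, lin r.+1 n = lin r.+1 m -> n r = m r /\ lin r n = lin r m.
    move=> n m; rewrite !linS => E.
    have [Hlt|Hgt|Heq] := ltngtP (n r) (m r).
    - exfalso; apply: NB; exists (m r - n r)%N, m, n; split; first by rewrite subn_gt0.
      apply: (@canc_n _ _ (s r) (n r)); rewrite -addrA -mulrnDr subnK ?E //; exact: ltnW.
    - exfalso; apply: NB; exists (n r - m r)%N, n, m; split; first by rewrite subn_gt0.
      apply: (@canc_n _ _ (s r) (m r)); rewrite -addrA -mulrnDr subnK ?E //; exact: ltnW.
    by split=> //; move: E; rewrite Heq; exact: canc_n.
  exists w'; split.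
    by move=> n m /eqr [E1 E2]; rewrite !Ew' E1 (Hc _ _ E2).
  move=> i Hi Hne; rewrite !Ew'.
  have [E|NE] := eqVneq ((P i).1 r) ((P i).2 r).
    rewrite E => /addIr; apply: Hs => // E2; apply: Hne; by rewrite !linS E2 E.
  move=> Heq.
  have tb : t = b i.
    have d0 : ((P i).1 r)%:R - ((P i).2 r)%:R != 0 :> rat by rewrite subr_eq0 eqr_nat.
    rewrite /b; apply: (mulIf d0); rewrite divfK // mulrBr.
    move: Heq; set A := linw w r _; set B := linw w r _; set u := _%:R; set v := _%:R.
    move=> Heq; rewrite [t * u]mulrC [t * v]mulrC; set X := u * t in Heq *; set Y := v * t in Heq *; lra.
  have : `|b i| <= \sum_(j < p) `|b j|.
    by rewrite (bigD1 (Ordinal Hi)) //= lerDl sumr_ge0.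
  rewrite -tb /t => H.
  have : t <= `|t| := ler_norm t.
  rewrite /t; set S := \sum_(j < p) _ in H *; lra.
Qed.
End Ord.

Section Ord2.
Variable M : nmodType.
Hypothesis canc : forall a b c : M, a + c = b + c -> a = b.
Hypothesis tf : forall (n : nat) (a b : M), (0 < n)%N -> a *+ n = b *+ n -> a = b.

Lemma ord_weights (S : seq M) : exists phi : M -> rat,
  (forall a b, a \in S -> b \in S -> phi (a + b) = phi a + phi b) /\
  (forall a b, a \in S -> b \in S -> phi a = phi b -> a = b).
Proof.
pose r := size S; pose s := fun i => nth 0 S i.
pose e := fun j l : nat => nat_of_bool (l == j).
pose P := fun i => (e (i %/ r)%N, e (i %% r)%N).
have [w [Hc Hs]] := ord_vec canc tf s r (r * r) P.
have line : forall j, (j < r)%N -> lin s r (e j) = s j.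
  move=> j Hj; rewrite /lin (bigD1 (Ordinal Hj)) //= big1 ?addr0 /e ?eqxx //.
  by move=> l /negbTE; rewrite -val_eqE /= => ->.
have linwe : forall j, (j < r)%N -> linw w r (e j) = w j.
  move=> j Hj; rewrite /linw (bigD1 (Ordinal Hj)) //= big1 ?addr0 /e ?eqxx ?mul1r //.
  by move=> l /negbTE; rewrite -val_eqE /= => ->; rewrite mul0r.
have lin2 : forall i j, (i < r)%N -> (j < r)%N ->
    lin s r (fun l => 1 * e i l + 1 * e j l + 0 * e i l)%N = s i + s j.
  by move=> i j Hi Hj; rewrite lin_comb !mulr1n mulr0n addr0 !line.
pose eps := fun x => epsilon (inhabits (fun _ : nat => 0%N)) (fun n => lin s r n = x).
have epsP : forall n, lin s r (eps (lin s r n)) = lin s r n.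
  by move=> n; apply: (epsilon_spec (inhabits (fun _ : nat => 0%N)) (fun m => lin s r m = lin s r n)); exists n.
have phiE : forall n, linw w r (eps (lin s r n)) = linw w r n := fun n => Hc _ _ (epsP n).
have inS : forall a, a \in S -> exists2 i, (i < r)%N & a = s i.
  by move=> a Ha; exists (index a S); rewrite ?index_mem // /s nth_index.
exists (fun x => linw w r (eps x)); split.
  move=> a b /inS [ia Hia ->] /inS [ib Hib ->].
  by rewrite -(lin2 _ _ Hia Hib) phiE linw_comb !mul1r mul0r addr0 -(line _ Hia) -(line _ Hib) !phiE.
move=> a b /inS [ia Hia ->] /inS [ib Hib ->].
rewrite -(line _ Hia) -(line _ Hib) !phiE !linwe // !line // => Hw.
case: (eqVneq (s ia) (s ib)) => // Hab; exfalso.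
have Hi : (ia * r + ib < r * r)%N.
  by nia.
have := Hs _ Hi.
rewrite /P /= divnMDl ?(leq_ltn_trans _ Hia) // divn_small // addn0 modnMDl modn_small //.
by rewrite !line // !linwe //; move=> /(_ (elimN eqP Hab)).
Qed.
End Ord2.



Lemma uniq_map_inj (T1 T2 : eqType) (f : T1 -> T2) (s : seq T1) x y :
  uniq (map f s) -> x \in s -> y \in s -> f x = f y -> x = y.
Proof.
elim: s => //= z s IH /andP [Hz Hu]; rewrite !inE => /orP [/eqP->|Hx] /orP [/eqP->|Hy] //.
- by move=> E; move: Hz; rewrite E map_f.
- by move=> E; move: Hz; rewrite -E map_f.
- exact: IH.
Qed.

Lemma count_le (T : Type) (P Q : pred T) (s : seq T) :
  (forall z, P z -> Q z) -> (count P s <= count Q s)%N.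
Proof.
move=> H; elim: s => //= z s IH; apply: leq_add => //.
by case: (boolP (P z)) => //= /H ->.
Qed.

Lemma count_lt (T : eqType) (P Q : pred T) (s : seq T) x :
  (forall z, P z -> Q z) -> x \in s -> Q x -> ~~ P x -> (count P s < count Q s)%N.
Proof.
move=> H; elim: s => //= z s IH; rewrite inE => /orP [/eqP<-|Hx] Qx NPx.
  by rewrite Qx (negbTE NPx) /= add0n add1n ltnS count_le.
rewrite -addnS; apply: leq_add; last exact: IH.
by case: (boolP (P z)) => //= /H ->.
Qed.

Section Core.
Variable K : fieldType.
Variable R : K -> Prop.
Hypothesis R1 : R 1.
Hypothesis RB : forall x y, R x -> R y -> R (x - y).
Hypothesis RM : forall x y, R x -> R y -> R (x * y).

Lemma R0 : R 0. Proof. by rewrite -(subrr 1); apply: RB. Qed.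
Lemma RN x : R x -> R (- x). Proof. by move=> H; rewrite -sub0r; apply: RB => //; exact: R0. Qed.
Lemma RD x y : R x -> R y -> R (x + y).
Proof. by move=> Hx Hy; rewrite -[y]opprK; apply: RB => //; exact: RN. Qed.
Lemma RX x n : R x -> R (x ^+ n).
Proof. by move=> H; elim: n => [|n IH]; rewrite ?expr0 // exprS; apply: RM. Qed.
Lemma Rsum (I : Type) (l : seq I) (P : pred I) (F : I -> K) :
  (forall i, P i -> R (F i)) -> R (\sum_(i <- l | P i) F i).
Proof. by move=> H; elim/big_rec: _ => [|i x Pi Hx]; [exact: R0|apply: RD => //; exact: H]. Qed.
Lemma Rprod (I : Type) (l : seq I) (P : pred I) (F : I -> K) :
  (forall i, P i -> R (F i)) -> R (\prod_(i <- l | P i) F i).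
Proof. by move=> H; elim/big_rec: _ => [|i x Pi Hx] //; apply: RM => //; exact: H. Qed.

Definition submodR (T : K -> Prop) :=
  [/\ T 0, (forall x y, T x -> T y -> T (x + y)) & (forall r x, R r -> T x -> T (r * x))].

Lemma Tsum T (I : Type) (l : seq I) (P : pred I) (F : I -> K) : submodR T ->
  (forall i, P i -> T (F i)) -> T (\sum_(i <- l | P i) F i).
Proof. by move=> [T0 TD TM] H; elim/big_rec: _ => [|i x Pi Hx] //; apply: (TD) => //; exact: H. Qed.

Lemma TB T x y : submodR T -> T x -> T y -> T (x - y).
Proof. move=> [T0 TD TM] Hx Hy; apply: (TD) => //; rewrite -mulN1r; apply: (TM) => //; exact: RN. Qed.

Definition Sc (F G : seq (rat * K)) c :=
  \sum_(p <- F) \sum_(q <- G | p.1 + q.1 == c) p.2 * q.2.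
Definition prodl (l : seq (rat * K)) := \prod_(p <- l) p.2.


Lemma sum_single (G : seq (rat * K)) q : uniq (map fst G) -> q \in G ->
  \sum_(q' <- G | q'.1 == q.1) q'.2 = q.2.
Proof.
elim: G => //= z G IH /andP [Hz Hu]; rewrite inE big_cons => /orP [/eqP->|Hq].
  rewrite eqxx big1_seq ?addr0 // => i /andP [/eqP Hi HiG].
  by move: Hz; rewrite -Hi map_f.
have -> : (z.1 == q.1) = false.
  by apply/negbTE; apply: contra Hz => /eqP ->; rewrite map_f.
exact: IH.
Qed.

Lemma exists_max (F : seq (rat * K)) : F != [::] ->
  exists2 top, top \in F & forall p, p \in F -> p.1 <= top.1.
Proof.
elim: F => //= z F IH _; case: (eqVneq F [::]) => [->|/IH [t Ht Hm]].
  by exists z; rewrite ?inE ?eqxx // => p; rewrite inE => /eqP->.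
case: (lerP z.1 t.1) => Hzt.
  exists t; first by rewrite inE Ht orbT.
  by move=> p; rewrite inE => /orP [/eqP->|/Hm].
exists z; first by rewrite inE eqxx.
move=> p; rewrite inE => /orP [/eqP->|/Hm Hp] //; exact: (le_trans Hp (ltW Hzt)).
Qed.

Lemma prodl_R (l F : seq (rat * K)) : (forall p, p \in F -> R p.2) -> {subset l <= F} -> R (prodl l).
Proof.
move=> HF Hl; rewrite /prodl big_seq; apply: Rprod => i Hi; apply: HF; exact: Hl.
Qed.

Lemma core n : forall (F G : seq (rat * K)) (T : K -> Prop) (y : K),
  size F = n -> submodR T ->
  uniq (map fst F) -> uniq (map fst G) ->
  (forall p, p \in F -> R p.2) -> (forall q, q \in G -> R q.2) ->
  (forall c, T (y * Sc F G c)) ->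
  exists2 N, (0 < N)%N & forall l1 l2, size l1 = N -> size l2 = N ->
     {subset l1 <= F} -> {subset l2 <= G} -> T (y * prodl l1 * prodl l2).
Proof.
elim: n => [|n IHn] F G T y.
  move=> /size0nil -> _ _ _ _ _ _; exists 1%N => // l1 l2 Hl1 _ Hs.
  by case: l1 Hl1 Hs => // p l1 _ /(_ p); rewrite inE eqxx => /(_ isT).
move=> Hsz HT HuF HuG HRF HRG Hhyp.
have HT' := HT; case: HT' => [T0 TD TM].
have [top Htop Hmax] : exists2 top, top \in F & forall p, p \in F -> p.1 <= top.1.
  by apply: exists_max; apply/eqP => E; rewrite E in Hsz.
pose F' := rem top F; pose a := top.2.
have Hperm : perm_eq F (top :: F') := perm_to_rem Htop.
have HuF0 : uniq F := map_uniq HuF.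
have memF' : forall p, p \in F' = (p != top) && (p \in F).
  by move=> p; rewrite /F' (mem_rem_uniq _ HuF0) inE.
have HltF' : forall p, p \in F' -> p.1 < top.1.
  move=> p; rewrite memF' => /andP [Hne HpF]; rewrite lt_def Hmax // andbT.
  by apply: contra Hne => /eqP E; apply/eqP; apply: (uniq_map_inj HuF).
have Ha : R a by apply: (HRF).
have HScF : forall c, Sc F G c = a * \sum_(q <- G | top.1 + q.1 == c) q.2 + Sc F' G c.
  by move=> c; rewrite /Sc (perm_big _ Hperm) big_cons mulr_sumr.
pose cnt := fun q : rat * K => count (fun q' : rat * K => q.1 < q'.1) G.
have step : forall q, q \in G ->
    (forall q0, q0 \in G -> (cnt q0 < cnt q)%N -> T (y * a ^+ (cnt q0).+1 * q0.2)) ->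
    T (y * a ^+ (cnt q).+1 * q.2).
  move=> q HqG IH.
  have := Hhyp (top.1 + q.1); rewrite HScF.
  have -> : \sum_(q0 <- G | top.1 + q0.1 == top.1 + q.1) q0.2 = q.2.
    by rewrite -(sum_single HuG HqG); apply: eq_bigl => q0; rewrite (inj_eq (addrI _)).
  move=> Hc0.
  set S' := Sc F' G _ in Hc0.
  have Erest : a ^+ cnt q * (y * S') =
     \sum_(p <- F') \sum_(q0 <- G | p.1 + q0.1 == top.1 + q.1) p.2 * (y * a ^+ cnt q * q0.2).
    rewrite /S' /Sc !mulr_sumr; apply: eq_bigr => p _; rewrite !mulr_sumr; apply: eq_bigr => q0 _.
    by ring.
  have Hrest : T (a ^+ cnt q * (y * S')).
    rewrite Erest big_seq; apply: (Tsum _ HT) => p HpF'; rewrite big_seq_cond.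
    apply: (Tsum _ HT) => q0 /andP [Hq0G /eqP Heq].
    apply: (TM); first by apply: (HRF); exact: mem_rem HpF'.
    have Hlt0 : q.1 < q0.1 by have := HltF' _ HpF'; lra.
    have Hlt : (cnt q0 < cnt q)%N.
      apply: (count_lt _ Hq0G) => //; last by rewrite ltxx.
      by move=> z Hz; apply: lt_trans Hz.
    have E : a ^+ cnt q = a ^+ (cnt q - (cnt q0).+1) * a ^+ (cnt q0).+1 by rewrite -exprD subnK.
    rewrite E (_ : y * _ * q0.2 = a ^+ (cnt q - (cnt q0).+1) * (y * a ^+ (cnt q0).+1 * q0.2)); last by ring.
    by apply: (TM); [exact: RX|exact: IH].
  have -> : y * a ^+ (cnt q).+1 * q.2 = a ^+ cnt q * (y * (a * q.2 + S')) - a ^+ cnt q * (y * S').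
    by rewrite exprS; ring.
  by apply: (TB HT) => //; apply: (TM) => //; exact: RX.
have McC : forall h q, q \in G -> (cnt q <= h)%N -> T (y * a ^+ (cnt q).+1 * q.2).
  elim=> [|h IHh] q HqG Hc; apply: step => // q0 Hq0 Hlt.
    by move: Hc; rewrite leqn0 => /eqP E; rewrite E in Hlt.
  by apply: (IHh) => //; rewrite -ltnS; exact: leq_trans Hlt Hc.
pose k := (size G).+1.
have McK : forall q, q \in G -> T (y * a ^+ k * q.2).
  move=> q HqG; have Hle : ((cnt q).+1 <= k)%N by rewrite ltnS count_size.
  have E : a ^+ k = a ^+ (k - (cnt q).+1) * a ^+ (cnt q).+1 by rewrite -exprD subnK.
  rewrite E (_ : y * _ * q.2 = a ^+ (k - (cnt q).+1) * (y * a ^+ (cnt q).+1 * q.2)); last by ring.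
  by apply: (TM); [exact: RX|exact: (McC (cnt q))].
pose T' := fun z => exists t r, [/\ T t, R r & z = t + y * a * r].
have HT'm : submodR T'.
  rewrite /T'; split.
  - by exists 0, 0; rewrite mulr0 addr0; split => //; exact: R0.
  - move=> x1 x2 [t1 [r1 [Ht1 Hr1 ->]]] [t2 [r2 [Ht2 Hr2 ->]]].
    exists (t1 + t2), (r1 + r2); split; [exact: TD Ht1 Ht2|exact: RD|ring].
  - move=> r' x Hr' [t [r [Ht Hr ->]]]; exists (r' * t), (r' * r); split; [exact: TM Hr' Ht|exact: RM|ring].
have HszF' : size F' = n by rewrite /F' size_rem // Hsz.
have HuF' : uniq (map fst F').
  by have := HuF; rewrite (perm_uniq (perm_map fst Hperm)) /= => /andP [].
have HRF' : forall p, p \in F' -> R p.2 by move=> p Hp; apply: (HRF); exact: mem_rem Hp.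
have Hhyp' : forall c, T' (y * Sc F' G c).
  move=> c; exists (y * Sc F G c), (- \sum_(q <- G | top.1 + q.1 == c) q.2); split => //.
    by apply: RN; rewrite big_seq_cond; apply: Rsum => q /andP [Hq _]; exact: HRG.
  by rewrite HScF; ring.
have [N' HN'0 HN'] := IHn F' G T' y HszF' HT'm HuF' HuG HRF' HRG Hhyp'.
have BLK : forall m l1 l2, {subset l1 <= F'} -> {subset l2 <= G} ->
    (m * N' <= size l1)%N -> (m * N' <= size l2)%N ->
    exists t r, [/\ T t, R r & y * prodl l1 * prodl l2 = t + y * a ^+ m * r].
  elim=> [|m IHm] l1 l2 Hs1 Hs2 Hz1 Hz2.
    exists 0, (prodl l1 * prodl l2); split => //.
      by apply: RM; [exact: prodl_R HRF' Hs1|exact: prodl_R HRG Hs2].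
    by rewrite expr0; ring.
  have Hb1 : {subset drop N' l1 <= F'} by move=> x Hx; apply: Hs1; exact: mem_drop Hx.
  have Hb2 : {subset drop N' l2 <= G} by move=> x Hx; apply: Hs2; exact: mem_drop Hx.
  have Ha1 : {subset take N' l1 <= F'} by move=> x Hx; apply: Hs1; exact: mem_take Hx.
  have Ha2 : {subset take N' l2 <= G} by move=> x Hx; apply: Hs2; exact: mem_take Hx.
  have [t [r [Ht Hr E1]]] : exists t r, [/\ T t, R r &
      y * prodl (drop N' l1) * prodl (drop N' l2) = t + y * a ^+ m * r].
    by apply: IHm => //; rewrite size_drop; rewrite mulSn in Hz1 Hz2; lia.
  have [t' [r' [Ht' Hr' E2]]] : T' (y * prodl (take N' l1) * prodl (take N' l2)).
    by apply: HN' => //; apply: size_takel; rewrite mulSn in Hz1 Hz2; lia.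
  exists (prodl (take N' l1) * prodl (take N' l2) * t + a ^+ m * r * t'), (r * r'); split.
  - apply: (TD); apply: (TM) => //.
      by apply: RM; [exact: prodl_R HRF' Ha1|exact: prodl_R HRG Ha2].
    by apply: RM => //; exact: RX.
  - exact: RM.
  have Et : t = y * prodl (drop N' l1) * prodl (drop N' l2) - y * a ^+ m * r by rewrite E1 addrK.
  have Et' : t' = y * prodl (take N' l1) * prodl (take N' l2) - y * a * r' by rewrite E2 addrK.
  rewrite Et Et' -{1}(cat_take_drop N' l1) -{1}(cat_take_drop N' l2) /prodl !big_cat /= exprS.
  ring.
pose N := (k * N' + k)%N.
exists N; first by rewrite /N addn_gt0 orbT.
move=> l1 l2 Hz1 Hz2 Hs1 Hs2.
pose c := count (pred1 top) l1.
pose l1' := [seq p <- l1 | p != top].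
have E1 : prodl l1 = a ^+ c * prodl l1'.
  rewrite /prodl big_filter (bigID (pred1 top)) /=; congr (_ * _).
  rewrite (eq_bigr (fun _ => a)); last by move=> p /eqP ->.
  by rewrite /c; elim: (l1) => [|z l IH]; rewrite ?big_nil ?expr0 // big_cons /= IH; case: (z == top); rewrite ?exprS ?add0n.
have Hs1' : {subset l1' <= F'}.
  by move=> p; rewrite mem_filter memF' => /andP [-> /Hs1].
have Hsz1' : size l1' = (N - c)%N.
  by rewrite /l1' size_filter -Hz1 -(count_predC (pred1 top) l1) /c addKn.
case: l2 Hz2 Hs2 => [|v l2'] Hz2 Hs2; first by move: Hz2; rewrite /= /N /k; lia.
have Hv : v \in G by apply: Hs2; rewrite inE eqxx.
have Hs2' : {subset l2' <= G} by move=> x Hx; apply: Hs2; rewrite inE Hx orbT.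
have E2 : prodl (v :: l2') = v.2 * prodl l2' by rewrite /prodl big_cons.
rewrite E1 E2.
have HP1 : R (prodl l1') := prodl_R HRF' Hs1'.
have HP2 : R (prodl l2') := prodl_R HRG Hs2'.
case: (leqP k c) => Hkc.
  have -> : y * (a ^+ c * prodl l1') * (v.2 * prodl l2') =
      (a ^+ (c - k) * prodl l1' * prodl l2') * (y * a ^+ k * v.2).
    by rewrite -{1}(subnK Hkc) exprD; ring.
  apply: (TM); last exact: McK.
  by apply: RM => //; apply: RM => //; exact: RX.
have [t [r [Ht Hr E]]] := BLK k l1' l2' Hs1' Hs2'
   (ltac:(rewrite Hsz1' /N; lia)) (ltac:(move: Hz2 => /= Hz2; rewrite /N in Hz2; lia)).
have Et : t = y * prodl l1' * prodl l2' - y * a ^+ k * r by rewrite E addrK.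
have -> : y * (a ^+ c * prodl l1') * (v.2 * prodl l2') =
    (a ^+ c * v.2) * t + (a ^+ c * r) * (y * a ^+ k * v.2).
  by rewrite Et; ring.
apply: (TD); apply: (TM) => //; try exact: McK.
  by apply: RM; [exact: RX|exact: HRG].
by apply: RM => //; exact: RX.
Qed.

End Core.




Lemma regroup (K : nmodType) (I J : eqType) (L : seq I) (kf : I -> J) (Q : pred J) (v : I -> K) :
  \sum_(x <- L | Q (kf x)) v x = \sum_(j <- undup (map kf L) | Q j) \sum_(x <- L | kf x == j) v x.
Proof.
rewrite (eq_bigr (fun j => \sum_(x <- L) (if kf x == j then v x else 0))); last first.
  by move=> j _; rewrite big_mkcond.
rewrite exchange_big big_mkcond /=; apply: eq_big_seq => x HxL.
have Hx : kf x \in undup (map kf L) by rewrite mem_undup map_f.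
rewrite big_mkcond (bigD1_seq (kf x)) ?undup_uniq //= eqxx.
rewrite big1 ?addr0 //.
by move=> j /negbTE Hj; rewrite eq_sym Hj; case: (Q j).
Qed.


Lemma uniq_flatten_key (I T : eqType) (key : T -> I) (B : I -> seq T) (l : seq I) :
  uniq l -> (forall i, uniq (B i)) -> (forall i x, x \in B i -> key x = i) ->
  uniq (flatten (map B l)).
Proof.
move=> + HB Hk; elim: l => //= i l IH /andP [Hi Hu].
rewrite cat_uniq HB IH // andbT; apply/hasPn => x /flatten_mapP [j Hj HxB].
apply/negP => HxBi; move: Hi; rewrite -(Hk _ _ HxB) (Hk _ _ HxBi) in Hj.
by rewrite Hj.
Qed.

Lemma pair_mulrn (G : nmodType) (x : nat * G) n : x *+ n = (x.1 *+ n, x.2 *+ n).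
Proof. by elim: n => [|n IH]; rewrite ?mulr0n // !mulrS IH. Qed.

Lemma nat_mulrn (a n : nat) : a *+ n = (a * n)%N.
Proof. by elim: n => [|n IH]; rewrite ?mulr0n ?muln0 // mulrS IH mulnS. Qed.

Lemma pair_canc_tf (G : nmodType) : torsionfree_cancellative_monoid G ->
  (forall a b c : nat * G, a + c = b + c -> a = b) /\
  (forall (n : nat) (a b : nat * G), (0 < n)%N -> a *+ n = b *+ n -> a = b).
Proof.
move=> [Hc Ht]; split.
  move=> [a1 a2] [b1 b2] [c1 c2] [E1 E2]; congr pair; first exact: (addIn E1).
  exact: Hc E2.
move=> n [a1 a2] [b1 b2] Hn; rewrite !pair_mulrn /= => -[E1 E2]; congr pair.
  by move: E1; rewrite !nat_mulrn => /eqP; rewrite eqn_pmul2r // => /eqP.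
exact: Ht E2.
Qed.

Section Graded.
Variables (G : nmodType) (K : fieldType) (R : K -> Prop) (Rg : G -> K -> Prop).
Hypothesis HR1 : R 1.
Hypothesis HRB : forall x y, R x -> R y -> R (x - y).
Hypothesis HRM : forall x y, R x -> R y -> R (x * y).
Hypothesis Rg0 : forall a, Rg a 0.
Hypothesis RgB : forall a x y, Rg a x -> Rg a y -> Rg a (x - y).
Hypothesis RgR : forall a x, Rg a x -> R x.
Hypothesis RgM : forall a b x y, Rg a x -> Rg b y -> Rg (a + b) (x * y).
Hypothesis Rdec : forall x, R x -> exists (s : seq G) (f : G -> K),
      [/\ uniq s, (forall a, a \in s -> Rg a (f a)) & x = \sum_(a <- s) f a].
Hypothesis Rdir : forall (s : seq G) (f : G -> K), uniq s -> (forall a, a \in s -> Rg a (f a)) ->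
      \sum_(a <- s) f a = 0 -> forall a, a \in s -> f a = 0.

Lemma RgD a x y : Rg a x -> Rg a y -> Rg a (x + y).
Proof.
move=> Hx Hy; have -> : x + y = x - (0 - y) by ring.
by apply: RgB => //; apply: RgB.
Qed.

Lemma Rgsum a (I : Type) (l : seq I) (P : pred I) (F : I -> K) :
  (forall i, P i -> Rg a (F i)) -> Rg a (\sum_(i <- l | P i) F i).
Proof. by move=> H; elim/big_rec: _ => [|i x Pi Hx]; [exact: Rg0|apply: RgD => //; exact: H]. Qed.

Lemma uniq_dec (s s' : seq G) (h h' : G -> K) x :
  uniq s -> (forall a, a \in s -> Rg a (h a)) -> x = \sum_(a <- s) h a ->
  uniq s' -> (forall a, a \in s' -> Rg a (h' a)) -> x = \sum_(a <- s') h' a ->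
  forall b, b \in s' -> h' b = if b \in s then h b else 0.
Proof.
move=> Hu Hg Hx Hu' Hg' Hx' b Hb.
pose L := s ++ [seq a <- s' | a \notin s].
pose d := fun a => (if a \in s then h a else 0) - (if a \in s' then h' a else 0).
have HuL : uniq L.
  rewrite /L cat_uniq Hu filter_uniq // andbT.
  by apply/hasPn => a; rewrite mem_filter => /andP [].
have HgL : forall a, a \in L -> Rg a (d a).
  move=> a Ha; apply: RgB.
    by case: ifP => Has; [exact: Hg|exact: Rg0].
  by case: ifP => Has; [exact: Hg'|exact: Rg0].
have Hsum : \sum_(a <- L) d a = 0.
  rewrite sumrB /L !big_cat /=.
  have -> : \sum_(i <- [seq a <- s' | a \notin s]) (if i \in s then h i else 0) = 0.
    by rewrite big1_seq // => a; rewrite mem_filter => /andP [_ /andP [/negbTE -> _]].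
  rewrite addr0 -big_mkcond /= big_seq_cond (eq_bigl (fun a => a \in s)); last first.
    by move=> a /=; rewrite andbb.
  rewrite -big_seq -Hx.
  rewrite [X in _ - (_ + X)](eq_big_seq h'); last by move=> a; rewrite mem_filter => /andP [_ ->].
  rewrite [X in _ - (_ + X)]big_filter -[X in _ - (X + _)]big_mkcond /= -[X in _ - (X + _)]big_filter.
  rewrite (perm_big [seq i <- s' | i \in s]); last first.
    apply: uniq_perm; rewrite ?filter_uniq // => a; rewrite !mem_filter andbC //.
  by rewrite big_filter {1}Hx' (bigID (fun i => i \in s)) /= subrr.
have HbL : b \in L by rewrite /L mem_cat mem_filter Hb andbT; case: (b \in s).
have := Rdir HuL HgL Hsum HbL; rewrite /d Hb => /eqP; rewrite subr_eq0 => /eqP ->.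
by [].
Qed.


Lemma ideal_submod (S : K -> Prop) : submodR R (ideal_gen R S).
Proof.
split.
- by exists [::]; rewrite big_nil.
- move=> x y [s1 [H11 H12 ->]] [s2 [H21 H22 ->]]; exists (s1 ++ s2); split.
  + by move=> p; rewrite mem_cat => /orP [/H11|/H21].
  + by move=> p; rewrite mem_cat => /orP [/H12|/H22].
  + by rewrite big_cat.
- move=> r x Hr [s1 [H1 H2 ->]]; exists [seq (r * p.1, p.2) | p <- s1]; split.
  + by move=> p /mapP [q Hq ->] /=; apply: HRM => //; exact: H1.
  + by move=> p /mapP [q Hq ->] /=; exact: H2.
  + by rewrite big_map mulr_sumr; apply: eq_bigr => p _ /=; rewrite mulrA.
Qed.

Lemma ideal_gen_in (S : K -> Prop) y : S y -> ideal_gen R S y.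
Proof.
by move=> Hy; exists [:: (1, y)]; split; [move=> p; rewrite inE => /eqP -> | move=> p; rewrite inE => /eqP -> | rewrite big_seq1 mul1r].
Qed.

Lemma ideal_sub (T S : K -> Prop) z : submodR R T -> (forall y, S y -> T y) -> ideal_gen R S z -> T z.
Proof.
move=> HT HS [s1 [H1 H2 ->]]; have HT' := HT; case: HT' => [T0 TD TM].
rewrite big_seq; apply: (Tsum _ HT) => p Hp; apply: TM; [exact: H1|apply: HS; exact: H2].
Qed.

Definition dec_spec (x : K) (d : seq G * (G -> K)) :=
  [/\ uniq d.1, (forall a, a \in d.1 -> Rg a (d.2 a)) & x = \sum_(a <- d.1) d.2 a].
Definition dec (x : K) : seq G * (G -> K) :=
  epsilon (inhabits ([::], fun _ => 0)) (dec_spec x).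
Lemma decP x : R x -> dec_spec x (dec x).
Proof.
move=> Hx; apply: epsilon_spec; have [s [f [H1 H2 H3]]] := Rdec Hx.
by exists (s, f); split.
Qed.

Definition Fraw (f : {poly K}) : seq ((nat * G) * K) :=
  flatten [seq [seq ((i, a), (dec f`_i).2 a) | a <- (dec f`_i).1] | i <- iota 0 (size f)].

Lemma mem_Fraw f p : p \in Fraw f -> exists i a,
  [/\ (i < size f)%N, a \in (dec f`_i).1 & p = ((i, a), (dec f`_i).2 a)].
Proof.
move=> /flatten_mapP [i]; rewrite mem_iota add0n => /andP [_ Hi] /mapP [a Ha ->].
by exists i, a.
Qed.

Section Poly.
Variable f : {poly K}.
Hypothesis Hf : inRX R f.

Lemma Fraw_uniq : uniq (map fst (Fraw f)).
Proof.
rewrite /Fraw map_flatten -map_comp.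
apply: (@uniq_flatten_key _ _ fst); first exact: iota_uniq.
- move=> i /=; rewrite -map_comp; rewrite map_inj_uniq; first by have [] := decP (Hf i).
  by move=> a b /= [].
- by move=> i x /= /mapP [q /mapP [a _ ->] ->].
Qed.

Lemma Fraw_prop p : p \in Fraw f ->
  [/\ Rg p.1.2 p.2, R p.2 & hcomp Rg f`_(p.1.1) p.2].
Proof.
move=> /mem_Fraw [i [a [Hi Ha ->]]] /=.
have [H1 H2 H3] := decP (Hf i).
split; [exact: H2|exact: (RgR (H2 _ Ha))|].
by exists (dec f`_i).1, (dec f`_i).2; split => //; exists a.
Qed.

Lemma Fraw_coef k : f`_k = \sum_(p <- Fraw f | p.1.1 == k) p.2.
Proof.
rewrite /Fraw big_flatten big_map /=.
rewrite (eq_bigr (fun i => if i == k then f`_i else 0)); last first.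
  move=> i _; rewrite big_map /=; have [_ _ E] := decP (Hf i).
  case: (eqVneq i k) => [_|Hne]; first by rewrite [RHS]E.
  by rewrite big_pred0.
rewrite -big_mkcond /=.
case: (ltnP k (size f)) => Hk.
  rewrite big_mkcond (bigD1_seq k) ?iota_uniq ?mem_iota //= eqxx big1 ?addr0 //.
  by move=> i /negbTE ->.
rewrite nth_default // big1_seq // => i /andP [/eqP -> _]; exact: nth_default.
Qed.

Lemma Fraw_poly : f = \sum_(p <- Fraw f) p.2 *: 'X^(p.1.1).
Proof.
apply/polyP => k; rewrite coef_sum Fraw_coef big_mkcond /=; apply: eq_bigr => p _.
by rewrite coefZ coefXn eq_sym; case: eqP; rewrite ?mulr1 ?mulr0.
Qed.

Lemma Fraw_hcomp i y : hcomp Rg f`_i y -> y = 0 \/ exists2 p, p \in Fraw f & y = p.2.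
Proof.
move=> [s' [h' [Hu' Hg' Hx' [b Hb ->]]]].
case: (ltnP i (size f)) => Hi.
  have [H1 H2 H3] := decP (Hf i).
  rewrite (uniq_dec H1 H2 H3 Hu' Hg' Hx' Hb); case: ifP => Hbs; last by left.
  right; exists ((i, b), (dec f`_i).2 b) => //.
  by apply/flatten_mapP; exists i; rewrite ?mem_iota ?add0n //; apply/mapP; exists b.
left; rewrite (@uniq_dec [::] s' (fun _ => 0) h' f`_i) //.
by rewrite big_nil nth_default.
Qed.

Lemma coef_in_Af i : Af R Rg f f`_i.
Proof.
rewrite Fraw_coef big_seq_cond; apply: (Tsum _ (ideal_submod _)) => p /andP [Hp /eqP Hpi].
apply: ideal_gen_in; exists i; rewrite -Hpi; by have [] := Fraw_prop Hp.
Qed.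

End Poly.

Definition PL (f g : {poly K}) := [seq (p, q) | p <- Fraw f, q <- Fraw g].
Definition kap (x : ((nat * G) * K) * ((nat * G) * K)) : nat * G := x.1.1 + x.2.1.
Definition vl (x : ((nat * G) * K) * ((nat * G) * K)) : K := x.1.2 * x.2.2.
Definition Hs f g (j : nat * G) := \sum_(x <- PL f g | kap x == j) vl x.
Definition sk f g (k : nat) := [seq j.2 | j <- undup (map kap (PL f g)) & j.1 == k].

Section Prod.
Variables f g : {poly K}.
Hypothesis Hf : inRX R f.
Hypothesis Hg : inRX R g.

Lemma mem_PL x : x \in PL f g -> x.1 \in Fraw f /\ x.2 \in Fraw g.
Proof. by move=> /allpairsP [[p q] [Hp Hq ->]]. Qed.

Lemma PL_coef k : (f * g)`_k = \sum_(x <- PL f g | (kap x).1 == k) vl x.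
Proof.
have E : f * g = \sum_(x <- PL f g) vl x *: 'X^((kap x).1).
  rewrite {1}(Fraw_poly Hf) {1}(Fraw_poly Hg) big_allpairs mulr_suml; apply: eq_bigr => p _.
  rewrite mulr_sumr; apply: eq_bigr => q _.
  by rewrite /vl /kap /= -scalerAl -scalerAr scalerA exprD.
rewrite E coef_sum [RHS]big_mkcond; apply: eq_bigr => x _.
by rewrite coefZ coefXn eq_sym; case: eqP; rewrite ?mulr1 ?mulr0.
Qed.

Lemma sk_uniq k : uniq (sk f g k).
Proof.
rewrite /sk map_inj_in_uniq ?filter_uniq ?undup_uniq //.
by move=> [a1 a2] [b1 b2]; rewrite !mem_filter /= => /andP [/eqP -> _] /andP [/eqP -> _] ->.
Qed.

Lemma Hs_Rg k c : Rg c (Hs f g (k, c)).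
Proof.
rewrite /Hs big_seq_cond; apply: Rgsum => x /andP [/mem_PL [H1 H2] /eqP Hk].
have [Rg1 _ _] := Fraw_prop Hf H1; have [Rg2 _ _] := Fraw_prop Hg H2.
have -> : c = (kap x).2 by rewrite Hk.
exact: RgM.
Qed.

Lemma sk_sum k : (f * g)`_k = \sum_(c <- sk f g k) Hs f g (k, c).
Proof.
rewrite PL_coef (regroup _ _ (fun j => j.1 == k)) /sk big_map big_filter.
apply: eq_bigr => j /eqP <-; by rewrite -surjective_pairing.
Qed.

Lemma PL_hcomp k y : hcomp Rg (f * g)`_k y -> y = 0 \/ exists c, y = Hs f g (k, c).
Proof.
move=> [s' [h' [Hu' Hg' Hx' [b Hb ->]]]].
rewrite (uniq_dec (sk_uniq k) (fun c _ => Hs_Rg k c) (sk_sum k) Hu' Hg' Hx' Hb).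
by case: ifP => _; [right; exists b|left].
Qed.

Lemma Hs_Afg j : Af R Rg (f * g) (Hs f g j).
Proof.
case: j => j1 j2; case: (boolP (j2 \in sk f g j1)) => Hj.
  apply: ideal_gen_in; exists j1.
  exists (sk f g j1), (fun c => Hs f g (j1, c)); split.
  - exact: sk_uniq.
  - by move=> a _; exact: Hs_Rg.
  - exact: sk_sum.
  - by exists j2.
have -> : Hs f g (j1, j2) = 0.
  rewrite /Hs big1_seq // => x /andP [/eqP Hx HxL]; exfalso; move: Hj.
  rewrite /sk; apply/negP/negPn/mapP; exists (j1, j2) => //.
  by rewrite mem_filter eqxx mem_undup -Hx map_f.
by case: (ideal_submod (fun y => exists i, hcomp Rg (f * g)`_i y)).
Qed.

Lemma Hs_Af1 j : Af R Rg f (Hs f g j).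
Proof.
rewrite /Hs big_seq_cond; apply: (Tsum _ (ideal_submod _)) => x /andP [/mem_PL [H1 H2] _].
have [_ _ Hh1] := Fraw_prop Hf H1; have [_ R2 _] := Fraw_prop Hg H2.
rewrite /vl mulrC; case: (ideal_submod (fun y => exists i, hcomp Rg f`_i y)) => _ _ TM.
by apply: TM => //; apply: ideal_gen_in; exists x.1.1.1.
Qed.

Lemma Hs_Af2 j : Af R Rg g (Hs f g j).
Proof.
rewrite /Hs big_seq_cond; apply: (Tsum _ (ideal_submod _)) => x /andP [/mem_PL [H1 H2] _].
have [_ R1 _] := Fraw_prop Hf H1; have [_ _ Hh2] := Fraw_prop Hg H2.
rewrite /vl; case: (ideal_submod (fun y => exists i, hcomp Rg g`_i y)) => _ _ TM.
by apply: TM => //; apply: ideal_gen_in; exists x.2.1.1.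
Qed.

Lemma Afg_sub z : Af R Rg (f * g) z -> Af R Rg f z /\ Af R Rg g z.
Proof.
move=> Hz; split; apply: (ideal_sub (ideal_submod _) _ Hz) => y [i /PL_hcomp [->|[c ->]]].
- by case: (ideal_submod (fun y => exists i, hcomp Rg f`_i y)).
- exact: Hs_Af1.
- by case: (ideal_submod (fun y => exists i, hcomp Rg g`_i y)).
- exact: Hs_Af2.
Qed.

End Prod.

Lemma R_submod : submodR R R.
Proof.
split; [exact: R0 HR1 HRB|exact: RD HR1 HRB|move=> r x Hr Hx; exact: HRM].
Qed.

Lemma R_nz : nz_submod R R.
Proof.
split; [exact: R0 HR1 HRB|exact: RD HR1 HRB|move=> r x Hr Hx; exact: HRM|].
by exists 1; rewrite ?oner_neq0.
Qed.

Lemma Af_in_R f z : Af R Rg f z -> R z.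
Proof.
apply: (ideal_sub R_submod) => y [i [s' [h' [_ Hg _ [b Hb ->]]]]].
exact: RgR (Hg b Hb).
Qed.

Lemma Af_nz f : inRX R f -> f != 0 -> nz_submod R (Af R Rg f).
Proof.
move=> Hf Hnz; case: (ideal_submod (fun y => exists i, hcomp Rg f`_i y)) => H0 HD HM.
split => //; exists (lead_coef f); first by rewrite lead_coef_eq0.
exact: coef_in_Af.
Qed.

Lemma inRX_mul f g : inRX R f -> inRX R g -> inRX R (f * g).
Proof.
move=> Hf Hg i; rewrite coefM; apply: (Rsum HR1 HRB) => j _; exact: HRM.
Qed.

Lemma inRX_1 : inRX R 1.
Proof. by move=> i; rewrite coef1; case: (i == 0)%N => //; exact: R0 HR1 HRB. Qed.

Lemma peel (P : K -> Prop) (F : seq (rat * K)) :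
  (forall z, (forall p, p \in F -> P (z * p.2)) -> P z) ->
  forall N W, (forall l, size l = N -> {subset l <= F} -> P (W * prodl l)) -> P W.
Proof.
move=> Hcol; elim=> [|N IH] W H.
  by have := H [::] erefl (fun x (Hx : x \in [::]) => ltac:(by rewrite in_nil in Hx)); rewrite /prodl big_nil mulr1.
apply: IH => l Hl Hs; apply: Hcol => p Hp.
have := H (p :: l); rewrite /= Hl => /(_ erefl).
have Hsp : {subset p :: l <= F} by move=> x; rewrite in_cons => /orP [/eqP -> //|]; exact: Hs.
by move=> /(_ Hsp); rewrite /prodl big_cons (mulrC p.2) mulrA.
Qed.

Section Star.
Variable star : (K -> Prop) -> (K -> Prop).
Hypothesis Hst : semistar R star.

Lemma scale_nz x E : x != 0 -> nz_submod R E -> nz_submod R (scale_set x E).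
Proof.
move=> Hx [E0 ED EM [e He Ee]]; split.
- by exists 0; rewrite ?mulr0.
- by move=> a b [e1 H1 ->] [e2 H2 ->]; exists (e1 + e2); rewrite ?mulrDr //; exact: ED.
- by move=> r a Hr [e1 H1 ->]; exists (r * e1); [exact: EM|rewrite mulrCA].
- by exists (x * e); [rewrite mulf_neq0|exists e].
Qed.

Lemma colon f E : inRX R f -> f != 0 -> star (Af R Rg f) = star R -> nz_submod R E ->
  forall z, (forall p, p \in Fraw f -> star E (z * p.2)) -> star E z.
Proof.
case: Hst => st_nz st_scale st_mono st_ext st_idem.
move=> Hf Hnz HfN HE z Hz.
have HQ := st_nz _ HE; have HQ' := HQ; case: HQ' => Q0 QD QM _.
case: (eqVneq z 0) => [->|Hz0] //.
have H1 : forall w, Af R Rg f w -> star E (z * w).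
  move=> w; apply: (@ideal_sub (fun w => star E (z * w))).
    split; [by rewrite mulr0|by move=> a b Ha Hb; rewrite mulrDr; exact: QD|].
    by move=> r a Hr Ha; rewrite mulrCA; exact: QM.
  move=> y [i /(Fraw_hcomp Hf) [->|[p Hp ->]]]; [by rewrite mulr0|exact: Hz].
have H2 : forall w, scale_set z (Af R Rg f) w -> star E w by move=> w [e He ->]; exact: H1.
have H3 := st_mono _ _ (scale_nz Hz0 (Af_nz Hf Hnz)) HQ H2.
rewrite st_idem // st_scale // ?HfN in H3; last exact: Af_nz.
rewrite -[z]mulr1; apply: H3; exists 1 => //; apply: st_ext; [exact: R_nz|exact: HR1].
Qed.


Hypothesis HG : torsionfree_cancellative_monoid G.

Lemma mult_closed f g : Nstar R Rg star f -> Nstar R Rg star g ->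
  star (Af R Rg (f * g)) = star R.
Proof.
have Hst' := Hst; case: Hst' => st_nz st_scale st_mono st_ext st_idem.
move=> [Hf Hf0 HfN] [Hg Hg0 HgN].
have [cD tD] := pair_canc_tf HG.
have [phi [Hadd Hinj]] := ord_weights cD tD (map fst (Fraw f) ++ map fst (Fraw g)).
pose F := [seq (phi p.1, p.2) | p <- Fraw f].
pose Gl := [seq (phi q.1, q.2) | q <- Fraw g].
have HuF : uniq (map fst F).
  have -> : map fst F = map phi (map fst (Fraw f)) by rewrite -!map_comp.
  rewrite map_inj_in_uniq; first exact: Fraw_uniq.
  by move=> a b Ha Hb; apply: Hinj; rewrite mem_cat ?Ha ?Hb.
have HuG : uniq (map fst Gl).
  have -> : map fst Gl = map phi (map fst (Fraw g)) by rewrite -!map_comp.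
  rewrite map_inj_in_uniq; first exact: Fraw_uniq.
  by move=> a b Ha Hb; apply: Hinj; rewrite mem_cat ?Ha ?Hb ?orbT.
have HRF : forall p, p \in F -> R p.2.
  by move=> p /mapP [p0 Hp0 ->]; have [] := Fraw_prop Hf Hp0.
have HRG : forall p, p \in Gl -> R p.2.
  by move=> p /mapP [p0 Hp0 ->]; have [] := Fraw_prop Hg Hp0.
have Hfg0 : f * g != 0 by rewrite mulf_neq0.
have HAfg := Af_nz (inRX_mul Hf Hg) Hfg0.
have Hhyp : forall c, Af R Rg (f * g) (1 * Sc F Gl c).
  move=> c; rewrite mul1r /Sc big_map.
  have -> : \sum_(p <- Fraw f) \sum_(q <- Gl | (phi p.1, p.2).1 + q.1 == c) (phi p.1, p.2).2 * q.2
      = \sum_(x <- PL f g | phi (kap x) == c) vl x.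
    rewrite [RHS]big_mkcond big_allpairs; apply: eq_big_seq => p Hp.
    rewrite big_map [LHS]big_mkcond; apply: eq_big_seq => q Hq.
    by rewrite /kap /vl /= Hadd // mem_cat; [rewrite (map_f fst Hp) | rewrite (map_f fst Hq) orbT].
  rewrite (regroup (PL f g) kap (fun j => phi j == c) vl); apply: (Tsum _ (ideal_submod _)) => j _; exact: Hs_Afg.
have [N HN0 HN] := core HR1 HRB HRM (erefl (size F)) (ideal_submod _) HuF HuG HRF HRG Hhyp.
pose Q := star (Af R Rg (f * g)).
have HQ : forall l1 l2, size l1 = N -> size l2 = N -> {subset l1 <= F} -> {subset l2 <= Gl} ->
    Q (prodl l1 * prodl l2).
  move=> l1 l2 H1 H2 H3 H4; apply: st_ext => //; rewrite -[prodl l1]mul1r; exact: HN.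
have colF : forall z, (forall p, p \in F -> Q (z * p.2)) -> Q z.
  move=> z Hz; apply: (colon Hf Hf0 HfN HAfg) => p Hp.
  exact: (Hz _ (map_f (fun p => (phi p.1, p.2)) Hp)).
have colG : forall z, (forall p, p \in Gl -> Q (z * p.2)) -> Q z.
  move=> z Hz; apply: (colon Hg Hg0 HgN HAfg) => p Hp.
  exact: (Hz _ (map_f (fun p => (phi p.1, p.2)) Hp)).
have Q1 : Q 1.
  apply: (@peel Q F colF N 1) => l1 Hl1 Hs1; rewrite mul1r.
  apply: (@peel Q Gl colG N (prodl l1)) => l2 Hl2 Hs2; exact: HQ.
apply: functional_extensionality => z; apply: propositional_extensionality; split.
  apply: st_mono => //; [exact: R_nz|move=> w; exact: Af_in_R].
move=> Hz; rewrite -(st_idem _ HAfg); apply: (st_mono _ _ R_nz (st_nz _ HAfg)) Hz => r Hr.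
rewrite -[r]mulr1; have [_ _ QM _] := st_nz _ HAfg; exact: QM.
Qed.

Lemma main_graded : saturated_mult_closed R (Nstar R Rg star).
Proof.
have Hst' := Hst; case: Hst' => st_nz st_scale st_mono st_ext st_idem.
split.
- by move=> f [].
- split; [exact: inRX_1|exact: oner_neq0|].
  have -> : Af R Rg 1 = R => //.
  apply: functional_extensionality => z; apply: propositional_extensionality; split.
    exact: Af_in_R.
  move=> Hz; rewrite -[z]mulr1; have := coef_in_Af inRX_1 0; rewrite coef1 eqxx /=.
  case: (ideal_submod (fun y => exists i, hcomp Rg (1 : {poly K})`_i y)) => _ _ TM.
  exact: TM.
- move=> f g Hf Hg; have [Hf1 Hf0 _] := Hf; have [Hg1 Hg0 _] := Hg.
  split; [exact: inRX_mul|by rewrite mulf_neq0|exact: mult_closed].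
- move=> f g Hf Hg [Hfg Hfg0 HfgN].
  have Hf0 : f != 0 by apply: contraNneq Hfg0 => ->; rewrite mul0r.
  have Hg0 : g != 0 by apply: contraNneq Hfg0 => ->; rewrite mulr0.
  have HAfg := Af_nz Hfg Hfg0.
  split; split => //; apply: functional_extensionality => z; apply: propositional_extensionality; split.
  + by apply: st_mono => //; [exact: Af_nz|exact: R_nz|move=> w; exact: Af_in_R].
  + rewrite -HfgN; apply: st_mono => //; [exact: Af_nz|by move=> w /(Afg_sub Hf Hg) []].
  + by apply: st_mono => //; [exact: Af_nz|exact: R_nz|move=> w; exact: Af_in_R].
  + rewrite -HfgN; apply: st_mono => //; [exact: Af_nz|by move=> w /(Afg_sub Hf Hg) []].
Qed.
End Star.
End Graded.


Unset Implicit Arguments.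

Theorem lemma2p2 (G : nmodType) (K : fieldType) (R : K -> Prop) (Rg : G -> K -> Prop)
    (star : (K -> Prop) -> (K -> Prop)) :
  torsionfree_cancellative_monoid G ->
  graded_domain R Rg ->
  semistar R star ->
  saturated_mult_closed R (Nstar R Rg star).
Proof.
move=> HG [[HR1 HRB HRM] [Rg0 [RgB [RgR [RgM [Rdec [Rdir _]]]]]]] Hst.
by apply: main_graded.
Qed.
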